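(* Let $\mathcal{P}$ and $\mathcal{N}$ be disjoint sets of functions $[n]\to[r]$. Let $A,B$ be sets with maps $A\ni a\mapsto f_a\in\mathcal{P}$ and $B\ni b\mapsto g_b\in\mathcal{N}$, and let $\mu,\nu$ be probability measures supported on $A$ and $B$ respectively. Let $C_1,C_2>0$ be constants. Suppose that for every deterministic decision tree $\mathcal{T}$ of depth $q$ there is a partial map $\eta\colon B\to A$ such that (1) $\mathcal{T}(f_{\eta(b)})=\mathcal{T}(g_b)$ for every $b$ in the domain of $\eta$; (2) $\mu(\eta(B))\ge C_1$; (3) $\nu(\eta^{-1}(a))\ge C_2\,\mu(a)$ for every $a\in\eta(B)$. Then every randomized query algorithm that distinguishes $\mathcal{P}$ from $\mathcal{N}$ (accepting every $f\in\mathcal{P}$ and rejecting every $g\in\mathcal{N}$ with probability at least $2/3$) makes $\Omega(q)$ queries, where the implied constant depends only on $C_1,C_2$.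
   Context: $[m]=\{0,\dots,m-1\}$. A deterministic decision tree queries values of the input function adaptively; $\mathcal{T}(f)$ denotes the leaf at which the tree $\mathcal{T}$ terminates on input $f$. *)

(* Defs.v *)
From HB Require Import structures.
From mathcomp Require Import all_boot all_order all_algebra.
From mathcomp Require Import reals.
Set Implicit Arguments. Unset Strict Implicit. Unset Printing Implicit Defensive.
Import Order.TTheory GRing.Theory Num.Theory.

Notation input n r := {ffun 'I_n -> 'I_r}.

(* Deterministic decision trees querying values of an input [n] -> [r];
   leaves carry the output bit (accept = true). *)
Inductive dtree (n r : nat) : Type :=
| Leaf of bool
| Node of 'I_n & ('I_r -> dtree n r).
Arguments Leaf {n r}.
Arguments Node {n r}.

Fixpoint dt_out n r (t : dtree n r) (x : input n r) : bool :=
  match t with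
  | Leaf b => b
  | Node i k => dt_out (k (x i)) x
  end.

(* The leaf T(x) at which the tree terminates on x, identified by the
   root-to-leaf path (sequence of queried positions and answers). *)
Fixpoint dt_leaf n r (t : dtree n r) (x : input n r) : seq ('I_n * 'I_r) :=
  match t with
  | Leaf _ => [::]
  | Node i k => (i, x i) :: dt_leaf (k (x i)) x
  end.

Fixpoint depth_le n r (t : dtree n r) (d : nat) : Prop :=
  match t, d with
  | Leaf _, _ => True
  | Node _ _, 0 => False
  | Node _ k, d'.+1 => forall j, depth_le (k j) d'
  end.

Local Open Scope ring_scope.

Definition is_prob (R : realType) (T : finType) (p : T -> R) : Prop :=
  (forall t, 0 <= p t) /\ \sum_(t : T) p t = 1.

(* A randomized query algorithm: a probability distribution p over a finite
   family of deterministic decision trees T. *)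
Definition accept_prob (R : realType) n r (I : finType) (p : I -> R)
  (T : I -> dtree n r) (x : input n r) : R :=
  \sum_(i : I) p i * (dt_out (T i) x)%:R.

(* Main.v *)
Require Import Defs.
From HB Require Import structures.
From mathcomp Require Import all_boot all_order all_algebra.
From mathcomp Require Import reals.
From Stdlib Require List.
Import Order.TTheory GRing.Theory Num.Theory.
Set Implicit Arguments. Unset Strict Implicit.

Fixpoint graft {n r} (t u : dtree n r) : dtree n r :=
  match t with
  | Leaf _ => u
  | Node i k => Node i (fun j => graft (k j) u)
  end.

Lemma depth_le_mono n r (t : dtree n r) d d' : depth_le t d -> (d <= d')%N -> depth_le t d'.
Proof.
elim: t d d' => [b|i k IH] d d' //=.
case: d => [|d] //; case: d' => [|d'] // H le j; exact: IH (H j) le.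
Qed.

Lemma depth_graft n r (t u : dtree n r) d1 d2 :
  depth_le t d1 -> depth_le u d2 -> depth_le (graft t u) (d1 + d2).
Proof.
elim: t d1 => [b|i k IH] d1 /= Ht Hu.
  by apply: depth_le_mono Hu _; rewrite leq_addl.
case: d1 Ht => [|d1] // Ht; rewrite addSn => j; exact: IH.
Qed.

Lemma leaf_graft n r (t u : dtree n r) x y :
  dt_leaf (graft t u) x = dt_leaf (graft t u) y ->
  dt_out t x = dt_out t y /\ dt_leaf u x = dt_leaf u y.
Proof.
elim: t => [b|i k IH] //= [e1 e2].
by rewrite e1 in e2 *; apply: IH.
Qed.

Definition tcomp n r (ts : seq (dtree n r)) := foldr (@graft n r) (Leaf true) ts.

Lemma depth_comp n r (ts : seq (dtree n r)) d :
  (forall t, List.In t ts -> depth_le t d) -> depth_le (tcomp ts) (size ts * d).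
Proof.
elim: ts => [|t ts IH] //= H.
rewrite mulSn; apply: depth_graft; first by apply: H; left.
by apply: IH => t' t'in; apply: H; right.
Qed.

Lemma leaf_comp n r (ts : seq (dtree n r)) x y :
  dt_leaf (tcomp ts) x = dt_leaf (tcomp ts) y ->
  forall t, List.In t ts -> dt_out t x = dt_out t y.
Proof.
elim: ts => [|t ts IH] //= H t'.
case: (leaf_graft H) => h1 h2.
by case=> [<- | /(IH h2)].
Qed.

Local Open Scope ring_scope.
From mathcomp Require Import ring lra zify.

Lemma amp (R : realType) (I : finType) (p : I -> R) (b : I -> bool) m :
  is_prob p -> 2%:R/3%:R <= \sum_i p i * (b i)%:R ->
  \sum_(F : {ffun 'I_(m.*2) -> I}) (\prod_j p (F j)) * (#|[pred j | b (F j)]| <= m)%N%:R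
    <= (8%:R/9%:R)^+m.
Proof.
move=> [p0 p1] ha.
pose w := fun i => 1 - (b i)%:R / (2%:R : R).
have wE i : w i = if b i then 2%:R^-1 else 1.
  by rewrite /w; case: (b i) => /=; rewrite ?subr0 //; field.
have step F : ((#|[pred j | b (F j)]| <= m)%N%:R : R) <= 2%:R^+m * \prod_j w (F j).
  have -> : \prod_j w (F j) = (2%:R^-1)^+ #|[pred j | b (F j)]|.
    rewrite -prodr_const [RHS]big_mkcond /=; apply: eq_bigr => j _; by rewrite wE.
  case: leqP => hc; last by rewrite mulr_ge0 // exprn_ge0 // invr_ge0.
  rewrite -(subnK hc) exprD -mulrA -exprMn mulfV ?pnatr_eq0 // expr1n mulr1.
  by apply: exprn_ege1; rewrite ler1n.
apply: (le_trans (y := \sum_(F : {ffun 'I_(m.*2) -> I}) (\prod_j p (F j)) * (2%:R^+m * \prod_j w (F j)))).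
  apply: ler_sum => F _; apply: ler_wpM2l; first by apply: prodr_ge0.
  exact: step.
have -> : \sum_(F : {ffun 'I_(m.*2) -> I}) (\prod_j p (F j)) * (2%:R^+m * \prod_j w (F j))
   = 2%:R^+m * \prod_(j < m.*2) \sum_i p i * w i.
  rewrite bigA_distr_bigA mulr_sumr; apply: eq_bigr => F _.
  by rewrite mulrCA big_split.
rewrite prodr_const card_ord.
have -> : \sum_i p i * w i = 1 - (\sum_i p i * (b i)%:R) / 2%:R.
  rewrite /w; under eq_bigr do rewrite mulrBr mulr1.
  by rewrite sumrB p1 mulr_suml; congr (_ - _); apply: eq_bigr => i _; rewrite mulrA.
set a := \sum_i p i * (b i)%:R in ha *.
have a1 : a <= 1.
  rewrite -p1; apply: ler_sum => i _; case: (b i); rewrite ?mulr1 ?mulr0 //.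
rewrite -mul2n exprM -exprMn; apply: lerXn2r; rewrite ?nnegrE.
- apply: mulr_ge0 => //; rewrite exprn_ge0 //; lra.
- lra.
- have h : 0 <= (a - 2%:R/3%:R) * (5%:R/3%:R - a/2%:R) by apply: mulr_ge0; lra.
  rewrite expr2; nra.
Qed.

Lemma leaf_comp_map n r (J : eqType) (h : J -> dtree n r) (s : seq J) x y :
  dt_leaf (tcomp (map h s)) x = dt_leaf (tcomp (map h s)) y ->
  forall j, j \in s -> dt_out (h j) x = dt_out (h j) y.
Proof.
move=> H j js; apply: (leaf_comp H); apply/List.in_map.
elim: s js {H} => [|k s IH] //; rewrite inE => /orP [/eqP -> | /IH]; [left|right] => //.
Qed.

Lemma depth_comp_map n r (J : Type) (h : J -> dtree n r) (s : seq J) d :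
  (forall j, depth_le (h j) d) -> depth_le (tcomp (map h s)) (size s * d).
Proof.
move=> H; rewrite -(size_map h); apply: depth_comp => t /List.in_map_iff [j [<- _]]; exact: H.
Qed.

Lemma core (R : realType) (A B : finType) (mu : A -> R) (nu : B -> R)
  (u : A -> bool) (v : B -> bool) (eta : B -> option A) (C1 C2 : R) :
  (forall a, 0 <= mu a) -> (forall b, 0 <= nu b) -> 0 <= C2 ->
  (forall b a, eta b = Some a -> u a = v b) ->
  C1 <= \sum_(a | [exists b, eta b == Some a]) mu a ->
  (forall a, [exists b, eta b == Some a] -> C2 * mu a <= \sum_(b | eta b == Some a) nu b) ->
  C2 * C1 <= \sum_b nu b * (v b)%:R + C2 * \sum_a mu a * (~~ u a)%:R.
Proof.
move=> mu0 nu0 c20 Huv HC1 HC2.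
set X := \sum_(a | [exists b, eta b == Some a]) mu a * (u a)%:R.
set RP := \sum_a mu a * (~~ u a)%:R.
have h1 : C1 <= X + RP.
  apply: (le_trans HC1).
  have -> : \sum_(a | [exists b, eta b == Some a]) mu a =
     X + \sum_(a | [exists b, eta b == Some a]) mu a * (~~ u a)%:R.
    rewrite /X -big_split /=; apply: eq_bigr => a _.
    by case: (u a); rewrite /= ?mulr1 ?mulr0 ?addr0 ?add0r.
  rewrite lerD2l /RP [X in _ <= X](bigID (fun a => [exists b, eta b == Some a])) /=.
  rewrite lerDl; apply: sumr_ge0 => a _; apply: mulr_ge0 => //.
have h2 : C2 * X <= \sum_a \sum_(b | eta b == Some a) nu b * (v b)%:R.
  rewrite /X mulr_sumr [X in _ <= X](bigID (fun a => [exists b, eta b == Some a])) /=.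
  apply: ler_wpDr; first by apply: sumr_ge0 => a _; apply: sumr_ge0 => b _; apply: mulr_ge0.
  apply: ler_sum => a Sa.
  have -> : \sum_(b | eta b == Some a) nu b * (v b)%:R = (\sum_(b | eta b == Some a) nu b) * (u a)%:R.
    rewrite mulr_suml; apply: eq_bigr => b /eqP e; by rewrite (Huv _ _ e).
  rewrite mulrA; apply: ler_wpM2r => //; exact: HC2.
have h3 : \sum_a \sum_(b | eta b == Some a) nu b * (v b)%:R <= \sum_b nu b * (v b)%:R.
  under eq_bigr do rewrite big_mkcond.
  rewrite exchange_big /=; apply: ler_sum => b _.
  case E: (eta b) => [a0|].
    rewrite (bigD1 a0) //= eqxx big1 ?addr0 // => a' ne.
    by case: eqP => // [[e]]; rewrite e eqxx in ne.
  by rewrite big1 // mulr_ge0.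
have h4 : C2 * C1 <= C2 * X + C2 * RP by rewrite -mulrDr; apply: ler_wpM2l.
apply: (le_trans h4); rewrite lerD2r; exact: (le_trans h2 h3).
Qed.

Lemma geom_bound (R : realType) m : (m%:R + 8%:R) * (8%:R/9%:R : R)^+m <= 8%:R.
Proof.
elim: m => [|m IH]; first by rewrite expr0 mulr1 add0r.
rewrite exprS mulrCA; apply: le_trans IH; rewrite mulrA ler_wpM2r //.
  by apply: exprn_ge0; lra.
have := ler0n R m; rewrite -natr1; lra.
Qed.

Lemma sum_prod_prob (R : realType) (I : finType) (p : I -> R) k :
  is_prob p -> \sum_(F : {ffun 'I_k -> I}) \prod_j p (F j) = 1.
Proof.
move=> [_ p1]; rewrite -(bigA_distr_bigA (fun (j : 'I_k) i => p i)) /=.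
by rewrite prodr_const p1 expr1n.
Qed.

Theorem lemma6p1 (R : realType) (C1 C2 : R) :
  0 < C1 -> 0 < C2 ->
  exists k : nat, (0 < k)%N /\
  forall (n r : nat) (P N : {set input n r}),
  [disjoint P & N] ->
  forall (A B : finType) (f : A -> input n r) (g : B -> input n r),
  (forall a, f a \in P) -> (forall b, g b \in N) ->
  forall (mu : A -> R) (nu : B -> R), is_prob mu -> is_prob nu ->
  forall q : nat,
  (forall T : dtree n r, depth_le T q ->
     exists eta : B -> option A,
       (forall b a, eta b = Some a -> dt_leaf T (f a) = dt_leaf T (g b)) /\
       \sum_(a | [exists b, eta b == Some a]) mu a >= C1 /\
       (forall a, [exists b, eta b == Some a] ->
          \sum_(b | eta b == Some a) nu b >= C2 * mu a)) ->
  forall (I : finType) (p : I -> R) (T : I -> dtree n r) (d : nat),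
  is_prob p ->
  (forall i, depth_le (T i) d) ->
  (forall x, x \in P -> accept_prob p T x >= 2%:R / 3%:R) ->
  (forall x, x \in N -> 1 - accept_prob p T x >= 2%:R / 3%:R) ->
  (q <= k * d)%N.
Proof.
move=> hC1 hC2.
set K := 8%:R * (1 + C2) / (C1 * C2).
have K0 : 0 <= K by apply: divr_ge0; [apply: mulr_ge0; lra | apply: mulr_ge0; lra].
set m := (Num.Def.archi_bound K).+1.
have Km : K < m%:R.
  apply: (lt_le_trans (archi_boundP K0)); rewrite ler_nat /m; exact: leqnSn.
exists m.*2; split; first by rewrite double_gt0.
move=> n r P N _ A B f g fP gN mu nu hmu hnu q Hq I p T d hp hT hP hN.
rewrite leqNgt; apply/negP => hlt.
have [hp0 hp1] := hp.
pose eps : R := (8%:R/9%:R)^+m.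
pose pi (F : {ffun 'I_(m.*2) -> I}) := \prod_j p (F j).
pose c (F : {ffun 'I_(m.*2) -> I}) x := #|[pred j | dt_out (T (F j)) x]|.
pose phi F x := (m < c F x)%N.
pose U (F : {ffun 'I_(m.*2) -> I}) := tcomp (map (fun j => T (F j)) (enum 'I_(m.*2))).
have pi0 F : 0 <= pi F by apply: prodr_ge0 => j _; case: hp.
have perF F : C2 * C1 <= \sum_b nu b * (phi F (g b))%:R + C2 * \sum_a mu a * (~~ phi F (f a))%:R.
  have dU : depth_le (U F) q.
    apply: (depth_le_mono (d := m.*2 * d)); last exact: ltnW.
    rewrite -[in X in depth_le _ (X * _)](size_enum_ord (m.*2)).
    exact: depth_comp_map.
  have [eta [Hl [H1 H2]]] := Hq _ dU.
  apply: (core (eta := eta)) => //; first by case: hmu. by case: hnu. lra.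
  move=> b a /Hl e; rewrite /phi /c; congr (m < _)%N; apply: eq_card => j.
  by rewrite !inE (leaf_comp_map e) // mem_enum.
have pos_bound x : 2%:R/3%:R <= accept_prob p T x ->
    \sum_F pi F * (~~ phi F x)%:R <= eps.
  move=> hx; apply: le_trans (amp (b := fun i => dt_out (T i) x) m hp hx).
  by apply: ler_sum => F _; rewrite /phi /c -leqNgt.
have neg_bound x : 2%:R/3%:R <= 1 - accept_prob p T x ->
    \sum_F pi F * (phi F x)%:R <= eps.
  move=> hx.
  have hx' : 2%:R/3%:R <= \sum_i p i * (~~ dt_out (T i) x)%:R.
    apply: (le_trans hx); rewrite /accept_prob -{1}hp1.
    rewrite -sumrB; apply: ler_sum => i _; case: (dt_out (T i) x); rewrite /= ?mulr0 ?mulr1 ?subr0 ?subrr //.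
  apply: le_trans (amp m hp hx'); apply: ler_sum => F _; apply: ler_wpM2l => //.
  rewrite /phi /c; case: ltnP => hm; last by rewrite ler0n.
  suff -> : (#|[pred j | ~~ dt_out (T (F j)) x]| <= m)%N by [].
  have := cardC [pred j | dt_out (T (F j)) x]; rewrite card_ord.
  have -> : #|[predC [pred j | dt_out (T (F j)) x]]| = #|[pred j | ~~ dt_out (T (F j)) x]|.
    by apply: eq_card => j; rewrite !inE.
  move=> e; move: e hm; move: (#|[pred j | dt_out (T (F j)) x]|) (#|[pred j | ~~ dt_out (T (F j)) x]|) => a b e hm.
  rewrite -addnn in e; lia.
have sum1 : \sum_F pi F = 1 by apply: sum_prod_prob.
have hAN : \sum_F pi F * (\sum_b nu b * (phi F (g b))%:R) <= eps.
  rewrite (eq_bigr (fun F => \sum_b nu b * (pi F * (phi F (g b))%:R))); last first.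
    by move=> F _; rewrite mulr_sumr; apply: eq_bigr => b _; rewrite mulrCA.
  rewrite exchange_big /=.
  rewrite (eq_bigr (fun b => nu b * \sum_F pi F * (phi F (g b))%:R)); last first.
    by move=> b _; rewrite mulr_sumr.
  have H : \sum_b nu b * \sum_F pi F * (phi F (g b))%:R <= \sum_b nu b * eps.
    apply: ler_sum => b _; apply: ler_wpM2l; first by case: hnu.
    by apply: neg_bound; apply: hN.
  apply: (le_trans H); rewrite -mulr_suml; case: hnu => _ ->; rewrite mul1r.
  done.
have hRP : \sum_F pi F * (\sum_a mu a * (~~ phi F (f a))%:R) <= eps.
  rewrite (eq_bigr (fun F => \sum_a mu a * (pi F * (~~ phi F (f a))%:R))); last first.
    by move=> F _; rewrite mulr_sumr; apply: eq_bigr => b _; rewrite mulrCA.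
  rewrite exchange_big /=.
  rewrite (eq_bigr (fun a => mu a * \sum_F pi F * (~~ phi F (f a))%:R)); last first.
    by move=> a _; rewrite mulr_sumr.
  have H : \sum_a mu a * \sum_F pi F * (~~ phi F (f a))%:R <= \sum_a mu a * eps.
    apply: ler_sum => a _; apply: ler_wpM2l; first by case: hmu.
    by apply: pos_bound; apply: hP.
  apply: (le_trans H); rewrite -mulr_suml; case: hmu => _ ->; rewrite mul1r.
  done.
have avg : C2 * C1 <= eps + C2 * eps.
  have -> : C2 * C1 = \sum_F pi F * (C2 * C1) by rewrite -mulr_suml sum1 mul1r.
  have H : \sum_F pi F * (C2 * C1) <= \sum_F pi F * (\sum_b nu b * (phi F (g b))%:R + C2 * \sum_a mu a * (~~ phi F (f a))%:R).
    by apply: ler_sum => F _; apply: ler_wpM2l.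
  apply: (le_trans H).
  under eq_bigr do rewrite mulrDr mulrCA.
  rewrite big_split /= -mulr_sumr; apply: lerD => //.
  by apply: ler_wpM2l => //; lra.
have G := geom_bound R m.
have e0 : 0 <= eps by apply: exprn_ge0; lra.
have m0 : 0 <= (m%:R : R) by apply: ler0n.
have hA : 8%:R * (1 + C2) < m%:R * (C1 * C2).
  by rewrite -ltr_pdivrMr // mulr_gt0.
have hB : m%:R * (C2 * C1) <= m%:R * (eps * (1 + C2)).
  by apply: ler_wpM2l => //; lra.
have G' : (m%:R * eps) * (1 + C2) <= 8%:R * (1 + C2).
  apply: ler_wpM2r; first lra.
  rewrite /eps; nra.
have : m%:R * (C1 * C2) <= 8%:R * (1 + C2).
  by rewrite [C1 * C2]mulrC; apply: (le_trans hB); rewrite mulrA.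
lra.
Qed.
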